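(* Let $\mathbb{F}_2=\langle a\rangle\ast\langle b\rangle$ and let $f=f_A\ast f_B$ be a split quasimorphism with bounded factors $f_A:\langle a\rangle\to\mathbb{R}$, $f_B:\langle b\rangle\to\mathbb{R}$. For $n\in\mathbb{Z}\setminus\{0\}$ let $\tau_n$ be the automorphism $a\mapsto a$, $b\mapsto a^nb$. Then the following are equivalent: (i) $\tau_n.f=f$; (ii) $\tau_n.\widehat f=\widehat f$; (iii) $\tau_n.\omega_f=\omega_f$; (iv) the function $f_A$ is $|n|$-periodic and $f_B$ is identically zero. Furthermore, if $|n|\leq 2$ these conditions imply $f=0$.
   Context: $f_A,f_B$ are alternating ($f(x^{-1})=-f(x)$). Each non-trivial element of $\mathbb{F}_2$ has a unique normal form $a^{k_1}b^{l_1}\cdots a^{k_m}b^{l_m}$ with all exponents non-zero except possibly $k_1$ or $l_m$, and $f(1)=0$, $f(a^{k_1}b^{l_1}\cdots a^{k_m}b^{l_m})=f_A(a^{k_1})+f_B(b^{l_1})+\dots+f_A(a^{k_m})+f_B(b^{l_m})$ (with $f_A(1)=f_B(1)=0$). The action of automorphisms on functions is $\tau.f=f\circ\tau^{-1}$; $\widehat f(g)=\lim_{k\to\infty}f(g^k)/k$ is the homogenization; $\omega_f\in\mathrm{H}^2_\mathrm{b}(\mathbb{F}_2,\mathbb{R})$ is the bounded class of $\partial f(g,h)=f(g)+f(h)-f(gh)$, and $\tau.\omega_f=\omega_{\tau.f}$. $f_A$ is $|n|$-periodic means $f_A(a^{k+n})=f_A(a^k)$ for all $k\in\mathbb{Z}$.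 *)

(* Defs.v *)
From mathcomp Require Import all_boot all_order all_algebra.
From mathcomp Require Import all_classical all_reals all_analysis.
Set Implicit Arguments. Unset Strict Implicit. Unset Printing Implicit Defensive.
Import Order.TTheory GRing.Theory Num.Theory numFieldNormedType.Exports.
Local Open Scope ring_scope.

(* A syllable (false, k) stands for a^k, (true, k) for b^k. *)
Definition syl := (bool * int)%type.

Definition reducedb (w : seq syl) : bool :=
  all (fun s : syl => s.2 != 0) w && sorted (fun x y : syl => x.1 != y.1) w.

Definition push (s : syl) (w : seq syl) : seq syl :=
  if s.2 == 0 then w else
  match w with
  | [::] => [:: s]
  | t :: w' =>
      if t.1 == s.1 then
        (if s.2 + t.2 == 0 then w' else (s.1, s.2 + t.2) :: w')
      else s :: w
  end.

Definition norm (w : seq syl) : seq syl := foldr push [::] w.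

Definition F2 := {w : seq syl | reducedb w}.

Definition F2one : F2 := exist _ [::] isT.
Definition F2mul (x y : F2) : F2 := insubd F2one (norm (val x ++ val y)).
Definition F2inv (x : F2) : F2 :=
  insubd F2one (rev (map (fun s : syl => (s.1, - s.2)) (val x))).
Definition F2pow (g : F2) (z : int) : F2 :=
  match z with
  | Posz m => iter m (F2mul g) F2one
  | Negz m => iter m.+1 (F2mul (F2inv g)) F2one
  end.

Definition gen_a : F2 := insubd F2one [:: (false, 1%:Z)].
Definition gen_b : F2 := insubd F2one [:: (true, 1%:Z)].

Definition F2ext (xa xb : F2) (w : F2) : F2 :=
  foldr (fun s acc => F2mul (F2pow (if s.1 then xb else xa) s.2) acc) F2one (val w).

Definition tau (n : int) : F2 -> F2 := F2ext gen_a (F2mul (F2pow gen_a n) gen_b).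
Definition tau_inv (n : int) : F2 -> F2 := tau (- n).

Definition alternatingf (R : realType) (h : int -> R) := forall k, h (- k) = - h k.
Definition boundedfun (T : Type) (R : realType) (h : T -> R) :=
  exists C : R, forall x, `|h x| <= C.

Definition split_qm (R : realType) (fA fB : int -> R) (g : F2) : R :=
  \sum_(s <- val g) (if s.1 then fB s.2 else fA s.2).

(* action of an automorphism (given by its inverse) on functions: tau.f = f o tau^{-1} *)
Definition act (R : realType) (tauinv : F2 -> F2) (f : F2 -> R) : F2 -> R :=
  fun g => f (tauinv g).

Definition homog (R : realType) (f : F2 -> R) (g : F2) : R :=
  limn (fun k : nat => f (F2pow g k%:Z) / k%:R).

Definition cobound (R : realType) (f : F2 -> R) (g h : F2) : R :=
  f g + f h - f (F2mul g h).

(* equality of the bounded classes [d f1] = [d f2] in H^2_b(F_2, R):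
   the cocycles differ by the coboundary of a bounded 1-cochain *)
Definition same_bclass (R : realType) (f1 f2 : F2 -> R) : Prop :=
  exists beta : F2 -> R, boundedfun beta /\
    forall g h, cobound f1 g h - cobound f2 g h = cobound beta g h.

(* Main.v *)
Require Import Defs.
From mathcomp Require Import all_boot all_order all_algebra.
From mathcomp Require Import all_classical all_reals all_analysis.
From mathcomp Require Import zify ring lra.
Import Order.TTheory GRing.Theory Num.Theory numFieldNormedType.Exports.
Local Open Scope classical_set_scope.
Local Open Scope ring_scope.

Lemma redcons (s : syl) w : reducedb (s :: w) =
  [&& s.2 != 0, reducedb w & (if w is t :: _ then s.1 != t.1 else true)].
Proof.
case: w => [|t w]; rewrite /reducedb /= ?andbT //.
by rewrite -!andbA; apply/idP/idP => /and5P[-> -> -> -> ->].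
Qed.

Lemma push_red s w : reducedb w -> reducedb (push s w).
Proof.
case: s => g i; rewrite /push /=; case: eqP => // /eqP i0.
case: w => [|[h j] w] /=; first by rewrite redcons i0.
rewrite redcons /= => /and3P[j0 rw hw].
case: eqP => [hg|/eqP hg].
  case: eqP => // /eqP ij.
  rewrite redcons ij rw /=; by move: hw; rewrite hg.
by rewrite redcons i0 redcons j0 rw hw eq_sym hg.
Qed.

Lemma push_cons s w : reducedb (s :: w) -> push s w = s :: w.
Proof.
case: s => g i; rewrite redcons /push /= => /and3P[/negbTE -> _].
by case: w => [|[h j] w] //= hg; rewrite eq_sym (negbTE hg).
Qed.

Lemma norm_red u : reducedb (norm u).
Proof. by elim: u => [|s u IH] //=; apply: push_red. Qed.

Lemma norm_id w : reducedb w -> norm w = w.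
Proof.
elim: w => [|s w IH] //= H; move: (H); rewrite redcons => /and3P[_ rw _].
by rewrite IH // push_cons.
Qed.

Lemma normE u v : norm (u ++ v) = foldr push (norm v) u.
Proof. by rewrite /norm foldr_cat. Qed.

Lemma actred u w : reducedb w -> reducedb (foldr push w u).
Proof. by elim: u => //= s u IH /IH; apply: push_red. Qed.

Lemma valM x y : val (F2mul x y) = foldr push (val y) (val x).
Proof.
rewrite /F2mul insubdK; first by rewrite normE norm_id //; case: y.
by apply: norm_red.
Qed.

Lemma push0 g w : push (g, 0) w = w.
Proof. by []. Qed.

Lemma push_add g i j w : reducedb w -> push (g, i) (push (g, j) w) = push (g, i + j) w.
Proof.
have [->|j0] := eqVneq j 0; first by rewrite addr0 push0.
have [->|i0] := eqVneq i 0; first by rewrite add0r push0.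
rewrite /push /= (negbTE j0) (negbTE i0).
case: w => [|[h k] w] /=.
  by rewrite eqxx; case: eqP.
rewrite redcons /= => /and3P[k0 rw hw].
case: (eqVneq h g) => [hg|hg]; first subst h.
  rewrite ?eqxx.
  have [jk|jk] := eqVneq (j + k) 0.
    have -> : i + j + k = i by rewrite -addrA jk addr0.
    rewrite (negbTE i0).
    have [ij|ij] := eqVneq (i + j) 0.
      have -> : k = i by move: jk ij => /eqP jk /eqP ij; lia.
      by case: w hw {rw} => [|[h' k'] w] //= hw; rewrite eq_sym (negbTE hw).
    by case: w hw {rw} => [|[h' k'] w] //= hw; rewrite eq_sym (negbTE hw).
  rewrite /= eqxx addrA.
  have [ij|ij] := eqVneq (i + j) 0 => //.
  by rewrite ij add0r (negbTE k0).
by rewrite /= eqxx; have [ij|ij] := eqVneq (i + j) 0.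
Qed.

Definition invw (u : seq syl) : seq syl := rev (map (fun s : syl => (s.1, - s.2)) u).

Lemma act_push s u w : reducedb u -> reducedb w ->
  foldr push w (push s u) = push s (foldr push w u).
Proof.
case: s => g i ru rw.
have [->|i0] := eqVneq i 0; first by rewrite !push0.
rewrite [push (g, i) u]/push /= (negbTE i0).
case: u ru => [|[h j] u] //= ru.
move: (ru); rewrite redcons /= => /and3P[j0 ru' _].
have rwu : reducedb (foldr push w u) by apply: actred.
case: (eqVneq h g) => [hg|hg]; first subst h.
  rewrite push_add //.
  by have [ij|ij] := eqVneq (i + j) 0 => /=; rewrite ?ij ?push0.
by [].
Qed.

Lemma act_norm u w : reducedb w -> foldr push w (norm u) = foldr push w u.
Proof.
move=> rw; elim: u => [|s u IH] //=.
by rewrite act_push // ?IH //; apply: norm_red.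
Qed.

Lemma F2mulA x y z : F2mul (F2mul x y) z = F2mul x (F2mul y z).
Proof.
apply: val_inj; rewrite !valM.
have -> : foldr push (val y) (val x) = norm (val x ++ val y).
  by rewrite normE norm_id //; case: y.
by rewrite act_norm ?foldr_cat //; case: z.
Qed.

Lemma F2mul1x x : F2mul F2one x = x.
Proof. by apply: val_inj; rewrite valM. Qed.

Lemma F2mulx1 x : F2mul x F2one = x.
Proof. by apply: val_inj; rewrite valM /= -/(norm _) norm_id //; case: x. Qed.

Lemma invw_red u : reducedb u -> reducedb (invw u).
Proof.
rewrite /reducedb /invw all_rev rev_sorted => /andP[a s]; apply/andP; split.
  by rewrite all_map; apply: sub_all a => t /=; rewrite oppr_eq0.
by rewrite sorted_map; apply: sub_sorted s => t1 t2 /=; rewrite eq_sym.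
Qed.

Lemma invwK u : invw (invw u) = u.
Proof.
rewrite /invw map_rev revK -map_comp map_id_in // => -[g i] _ /=.
by rewrite opprK.
Qed.

Lemma act_inv u w : reducedb w -> foldr push (foldr push w u) (invw u) = w.
Proof.
move=> rw; elim: u => [|[g i] u IH] //=.
rewrite /invw /= rev_cons foldr_rcons /= push_add; last by apply: actred.
by rewrite addNr push0.
Qed.

Lemma valI x : val (F2inv x) = invw (val x).
Proof. by rewrite /F2inv insubdK //; apply: invw_red; case: x. Qed.

Lemma F2mulVx x : F2mul (F2inv x) x = F2one.
Proof.
apply: val_inj; rewrite valM valI /=.
have rx : reducedb (val x) by case: x.
by rewrite -{1}(norm_id _ rx) /norm act_inv.
Qed.

Lemma F2mulxV x : F2mul x (F2inv x) = F2one.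
Proof.
apply: val_inj; rewrite valM valI /=.
have rx : reducedb (invw (val x)) by apply: invw_red; case: x.
rewrite -{1}(norm_id _ rx) /norm.
by rewrite -[X in foldr push _ X](invwK (val x)) act_inv.
Qed.

Lemma F2powS x i : F2pow x (i + 1) = F2mul x (F2pow x i).
Proof.
case: i => [m|[|m]].
- by have -> : Posz m + 1 = Posz m.+1 by lia.
- have -> : Negz 0 + 1 = 0 by [].
  by rewrite /= F2mulx1 F2mulxV.
- have -> : Negz m.+1 + 1 = Negz m by rewrite !NegzE; lia.
  change (F2pow x (Negz m.+1)) with (F2mul (F2inv x) (F2pow x (Negz m))).
  by rewrite -F2mulA F2mulxV F2mul1x.
Qed.

Lemma F2powP x i : F2pow x (i - 1) = F2mul (F2inv x) (F2pow x i).
Proof.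
by rewrite -{2}(subrK 1 i) F2powS -F2mulA F2mulVx F2mul1x.
Qed.

Lemma F2powD x i j : F2pow x (i + j) = F2mul (F2pow x i) (F2pow x j).
Proof.
case: i => [m|m].
  elim: m => [|m IH]; first by rewrite add0r F2mul1x.
  have -> : Posz m.+1 + j = (Posz m + j) + 1 by lia.
  by rewrite F2powS IH -F2mulA.
elim: m => [|m IH].
  have -> : Negz 0 + j = j - 1 by rewrite NegzE; lia.
  by rewrite F2powP /= F2mulx1.
have -> : Negz m.+1 + j = (Negz m + j) - 1 by rewrite !NegzE; lia.
rewrite F2powP IH -F2mulA.
by change (F2pow x (Negz m.+1)) with (F2mul (F2inv x) (F2pow x (Negz m))).
Qed.

Section Ext.
Variables xa xb : F2.
Definition phi (s : syl) : F2 := F2pow (if s.1 then xb else xa) s.2.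
Definition Phi (u : seq syl) : F2 := foldr (fun s acc => F2mul (phi s) acc) F2one u.

Lemma Phi_cat u v : Phi (u ++ v) = F2mul (Phi u) (Phi v).
Proof.
elim: u => [|s u IH] /=; first by rewrite F2mul1x.
by rewrite IH F2mulA.
Qed.

Lemma Phi_push s v : reducedb v -> Phi (push s v) = F2mul (phi s) (Phi v).
Proof.
case: s => g i rv.
have [->|i0] := eqVneq i 0; first by rewrite push0 /phi /= F2mul1x.
rewrite /push /= (negbTE i0).
case: v rv => [|[h j] v] //= rv.
case: (eqVneq h g) => [hg|hg]; first subst h.
  rewrite -F2mulA /phi /= -F2powD.
  by have [ij|ij] := eqVneq (i + j) 0 => /=; rewrite ?ij ?F2mul1x.
by [].
Qed.

Lemma Phi_norm u : Phi (norm u) = Phi u.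
Proof.
elim: u => [|s u IH] //=.
by rewrite Phi_push ?IH //; apply: norm_red.
Qed.

Lemma F2extE w : F2ext xa xb w = Phi (val w).
Proof. by []. Qed.

Lemma F2ext_mul x y : F2ext xa xb (F2mul x y) = F2mul (F2ext xa xb x) (F2ext xa xb y).
Proof.
rewrite !F2extE {1}/F2mul insubdK; last by apply: norm_red.
by rewrite Phi_norm Phi_cat.
Qed.

Lemma F2ext_pow x (j : nat) : F2ext xa xb (F2pow x j) = F2pow (F2ext xa xb x) j.
Proof.
elim: j => [|j IH] //.
change (F2pow x j.+1) with (F2mul x (F2pow x j)).
change (F2pow (F2ext xa xb x) j.+1) with (F2mul (F2ext xa xb x) (F2pow (F2ext xa xb x) j)).
by rewrite F2ext_mul IH.
Qed.
End Ext.

Definition mk (w : seq syl) : F2 := insubd F2one w.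
Lemma valmk w : reducedb w -> val (mk w) = w.
Proof. by move=> h; rewrite /mk insubdK. Qed.

Definition rep (j : nat) (u : seq syl) : seq syl := flatten (nseq j u).
Lemma repS j u : rep j.+1 u = u ++ rep j u.
Proof. by []. Qed.

Lemma cat_push u v : reducedb (u ++ v) -> foldr push v u = u ++ v.
Proof.
elim: u => [|s u IH] //= H; move: (H); rewrite redcons => /and3P[_ r _].
by rewrite IH // push_cons.
Qed.

Lemma red_cat x u y v : reducedb (x :: u) -> reducedb (y :: v) ->
  (last x u).1 != y.1 -> reducedb ((x :: u) ++ (y :: v)).
Proof.
rewrite /reducedb /= => /andP[/andP[x0 au] pu] /andP[/andP[y0 av] pv] j.
by rewrite x0 all_cat au /= y0 av /= cat_path pu /= j pv.
Qed.

Lemma rep_red x u j : reducedb (x :: u) -> (last x u).1 != x.1 ->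
  reducedb (rep j (x :: u)).
Proof.
move=> r c; elim: j => [|j IH] //.
rewrite repS; case: j IH => [|j] IH; first by rewrite cats0.
by rewrite repS /=; apply: red_cat.
Qed.

Lemma val_pow_cyc x u y j : val y = x :: u -> (last x u).1 != x.1 ->
  val (F2pow y (Posz j)) = rep j (x :: u).
Proof.
move=> vy c; have r : reducedb (x :: u) by rewrite -vy; case: y vy.
elim: j => [|j IH] //.
change (F2pow y j.+1) with (F2mul y (F2pow y j)).
by rewrite valM IH vy cat_push // -repS; apply: rep_red.
Qed.

Section W.
Variables (R : realType) (fA fB : int -> R).
Definition Wt (u : seq syl) : R := \sum_(s <- u) (if s.1 then fB s.2 else fA s.2).
Lemma Wcons s u : Wt (s :: u) = (if s.1 then fB s.2 else fA s.2) + Wt u.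
Proof. by rewrite /Wt big_cons. Qed.
Lemma Wnil : Wt [::] = 0.
Proof. by rewrite /Wt big_nil. Qed.
Lemma Wcat u v : Wt (u ++ v) = Wt u + Wt v.
Proof. by rewrite /Wt big_cat. Qed.
Lemma Wrep j u : Wt (rep j u) = j%:R * Wt u.
Proof.
elim: j => [|j IH]; first by rewrite mul0r Wnil.
by rewrite repS Wcat IH mulrS mulrDl mul1r.
Qed.
Lemma split_qmE g : split_qm fA fB g = Wt (val g).
Proof. by []. Qed.
End W.

Lemma val_pow1 g K (j : nat) : K != 0 ->
  val (F2pow (mk [:: (g, K)]) (Posz j)) = if j == 0%N then [::] else [:: (g, K * j%:Z)].
Proof.
move=> K0; elim: j => [|j IH] //.
change (F2pow (mk [:: (g, K)]) j.+1) with (F2mul (mk [:: (g, K)]) (F2pow (mk [:: (g, K)]) j)).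
rewrite valM IH valmk; last by rewrite redcons K0.
case: j {IH} => [|j] /=; first by rewrite /push (negbTE K0) mulr1.
rewrite /push (negbTE K0) /= eqxx.
have -> : K + K * (Posz j.+1) = K * (Posz j.+2) by rewrite -[Posz j.+2]/(1 + Posz j.+1) mulrDr mulr1.
by rewrite mulf_eq0 (negbTE K0).
Qed.

Lemma gen_aE : gen_a = mk [:: (false, 1)].
Proof. by []. Qed.
Lemma gen_bE : gen_b = mk [:: (true, 1)].
Proof. by []. Qed.

Lemma val_powg g (k : int) :
  val (F2pow (mk [:: (g, 1)]) k) = if k == 0 then [::] else [:: (g, k)].
Proof.
case: k => [j|p].
  by rewrite val_pow1 // mul1r; case: j.
change (F2pow (mk [:: (g, 1)]) (Negz p)) with (F2pow (F2inv (mk [:: (g, 1)])) p.+1).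
have -> : F2inv (mk [:: (g, 1)]) = mk [:: (g, -1)].
  by apply: val_inj; rewrite valI !valmk.
by rewrite val_pow1 // NegzE mulN1r.
Qed.

Definition xbm (m : int) : F2 := F2mul (F2pow gen_a m) gen_b.

Lemma val_xbm m : m != 0 -> val (xbm m) = [:: (false, m); (true, 1)].
Proof.
move=> m0; rewrite valM gen_aE val_powg (negbTE m0) /= valmk //.
by rewrite /push (negbTE m0).
Qed.

Lemma val_phi_a m k : val (phi gen_a (xbm m) (false, k)) =
  if k == 0 then [::] else [:: (false, k)].
Proof. by rewrite /phi /= gen_aE val_powg. Qed.

Lemma val_phi_bp m (j : nat) : m != 0 -> val (phi gen_a (xbm m) (true, Posz j)) =
  rep j [:: (false, m); (true, 1)].
Proof.
move=> m0; change (phi gen_a (xbm m) (true, Posz j)) with (F2pow (xbm m) (Posz j)).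
by apply: val_pow_cyc; rewrite ?val_xbm.
Qed.

Lemma val_phi_bn m (p : nat) : m != 0 -> val (phi gen_a (xbm m) (true, Negz p)) =
  rep p.+1 [:: (true, -1); (false, - m)].
Proof.
move=> m0.
change (phi gen_a (xbm m) (true, Negz p)) with (F2pow (F2inv (xbm m)) p.+1).
by apply: val_pow_cyc; rewrite ?valI ?val_xbm.
Qed.

Section Inv.
Variables (R : realType) (fA fB : int -> R) (m : int).
Hypotheses (m0 : m != 0) (hper : forall k, fA (k + m) = fA k)
  (halt : alternatingf fA) (hB0 : forall k, fB k = 0).

Local Notation W := (@Wt R fA fB).
Let fA0 : fA 0 = 0.
Proof. by have := halt 0; rewrite oppr0 => /eqP; rewrite -subr_eq0 opprK -mulr2n mulrn_eq0 /= => /eqP. Qed.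
Let fAm : fA m = 0.
Proof. by rewrite -[m]add0r hper fA0. Qed.
Let fAmm : fA (- m) = 0.
Proof. by rewrite halt fAm oppr0. Qed.
Let fAsub k : fA (k - m) = fA k.
Proof. by rewrite -hper subrK. Qed.

Definition okP (X : seq syl) := forall e Z, X = (true, e) :: Z -> 0 < e.
Definition okM (X : seq syl) := forall e Z, X = (false, m) :: (true, e) :: Z -> e < 0.

Lemma step_plus X : okP X -> exists e Z, [/\ 0 < e,
  foldr push X [:: (false, m); (true, 1)] = (false, m) :: (true, e) :: Z & W (foldr push X [:: (false, m); (true, 1)]) = W X].
Proof.
move=> hX.
have [e [Z [e0 E WE]]] : exists e Z, [/\ 0 < e, push (true, 1) X = (true, e) :: Z & W (push (true,1) X) = W X].
  case: X hX => [|[[] j] X] hX.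
  - by exists 1, [::]; rewrite !Wcons Wnil hB0 /= addr0.
  - have j0 := hX j X erefl.
    exists (1 + j), X; rewrite /push /= ?eqxx; have -> : (1 + j == 0) = false by apply/negbTE; rewrite gt_eqF //; lia.
    by split => //; [lia| rewrite !Wcons !hB0].
  - by exists 1, ((false, j) :: X); split; rewrite // !Wcons hB0 add0r.
exists e, Z; rewrite /= E /push /= (negbTE m0); split => //.
by rewrite Wcons /= fAm add0r -E.
Qed.

Lemma Lplus p X : okP X -> exists e Z, [/\ 0 < e,
  foldr push X (rep p.+1 [:: (false, m); (true, 1)]) = (false, m) :: (true, e) :: Z &
  W (foldr push X (rep p.+1 [:: (false, m); (true, 1)])) = W X].
Proof.
move=> hX; elim: p => [|p [e [Z [e0 E WE]]]].
  by rewrite /rep /= ?cats0; apply: step_plus.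
rewrite repS foldr_cat E.
have [e' [Z' [e0' E' WE']]] := @step_plus ((false, m) :: (true, e) :: Z) (fun _ _ h => ltac:(discriminate h)).
by exists e', Z'; split => //; rewrite WE' -E WE.
Qed.

Lemma step_minus X : okM X -> exists e Z, [/\ e < 0,
  foldr push X [:: (true, -1); (false, - m)] = (true, e) :: Z & W (foldr push X [:: (true, -1); (false, - m)]) = W X].
Proof.
move=> hX /=.
have mm0 : (- m == 0) = false by rewrite oppr_eq0 (negbTE m0).
case: X hX => [|[[] j] X] hX.
- by exists (-1), [:: (false, - m)]; rewrite /push /= mm0 /= !Wcons Wnil /= hB0 fAmm !addr0.
- by exists (-1), [:: (false, - m), (true, j) & X]; rewrite /push /= mm0 /= !Wcons /= !hB0 fAmm !add0r.
- have [jm|jm] := eqVneq j m.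
    subst j.
    have -> : push (false, - m) ((false, m) :: X) = X by rewrite /push /= mm0 /= addNr eqxx.
    case: X hX => [|[[] e] X] hX.
    + by exists (-1), [::]; rewrite /push /= !Wcons Wnil /= fAm !addr0.
    + have e0 := hX e X erefl.
      exists (-1 + e), X; rewrite /push /= ?eqxx.
      have -> : (-1 + e == 0) = false by apply/negbTE; rewrite lt_eqF //; move: e0; lia.
      split => //; first by move: e0; lia.
      by rewrite !Wcons /= !hB0 fAm !add0r.
    + by exists (-1), [:: (false, e) & X]; rewrite /push /= !Wcons /= !hB0 fAm !add0r.
  have -> : push (false, - m) ((false, j) :: X) = (false, - m + j) :: X.
    rewrite /push /= mm0 /=; have -> : (- m + j == 0) = false by apply/negbTE; rewrite addrC subr_eq0.
    by [].
  exists (-1), ((false, - m + j) :: X); rewrite /push /= !Wcons /= hB0 add0r; split => //.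
  by rewrite (addrC (- m) j) fAsub.
Qed.

Lemma Lminus p X : okM X -> exists e Z, [/\ e < 0,
  foldr push X (rep p.+1 [:: (true, -1); (false, - m)]) = (true, e) :: Z &
  W (foldr push X (rep p.+1 [:: (true, -1); (false, - m)])) = W X].
Proof.
move=> hX; elim: p => [|p [e [Z [e0 E WE]]]].
  by rewrite /rep /= ?cats0; apply: step_minus.
rewrite repS foldr_cat E.
have [e' [Z' [e0' E' WE']]] := @step_minus ((true, e) :: Z) (fun _ _ h => ltac:(discriminate h)).
by exists e', Z'; split => //; rewrite WE' -E WE.
Qed.

Definition TL (w : seq syl) := val (Phi gen_a (xbm m) w).

Definition Inv (w : seq syl) :=
  W (TL w) = W w /\
  match w with
  | [::] => TL w = [::]
  | (false, _) :: _ => okP (TL w) /\ okM (TL w)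
  | (true, l) :: _ => (0 < l -> exists e Z, 0 < e /\ TL w = (false, m) :: (true, e) :: Z)
                   /\ (l < 0 -> exists e Z, e < 0 /\ TL w = (true, e) :: Z)
  end.

Lemma TLcons s w : TL (s :: w) = foldr push (TL w) (val (phi gen_a (xbm m) s)).
Proof. by rewrite /TL /= valM. Qed.

Lemma InvP w : reducedb w -> Inv w.
Proof.
elim: w => [|[g i] w IH] //.
rewrite redcons /= => /and3P[i0 rw hw]; have {IH} [IW IS] := IH rw.
case: g hw => hw.
-
  have hX : okP (TL w) /\ okM (TL w).
    by case: w hw IW IS {rw} => [|[[] j] w] //= _ _.
  rewrite /Inv TLcons; case: i i0 => [j|p] i0.
  + have [j' ->] : exists j', j = j'.+1 by case: j i0 => // j' _; exists j'.
    have [e [Z [e0 E WE]]] := @Lplus j' _ hX.1.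
    rewrite val_phi_bp // E; split; first by rewrite -E WE IW Wcons hB0 add0r.
    by split => // _; exists e, Z.
  + have [e [Z [e0 E WE]]] := @Lminus p _ hX.2.
    rewrite val_phi_bn // E; split; first by rewrite -E WE IW Wcons hB0 add0r.
    by split => // _; exists e, Z.
-
  rewrite /Inv TLcons val_phi_a (negbTE i0) /=.
  case: w hw IW IS rw => [|[[] j] w] //= _ IW IS rw.
  + rewrite IS /push (negbTE i0) /=; split; first by rewrite !Wcons Wnil.
    by split => e Z // [].
  + have [Hp Hm] := IS.
    have [jp|jn] := ltP 0 j.
    * have [e [Z [e0 E]]] := Hp jp.
      rewrite E /push (negbTE i0) /= ?eqxx.
      rewrite E in IW; move: IW; rewrite !Wcons /= fAm !hB0 !add0r => IW.
      have [km|km] := eqVneq (i + m) 0.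
        have ->: i = - m by move: km => /eqP; lia.
        rewrite !Wcons /= !hB0 fAmm !add0r IW; split => //.
        by split => [e' Z' [<- _]|e' Z' []].
      rewrite !Wcons /= !hB0 !add0r hper IW; split => //.
      split => e' Z' [] //.
      by move=> /eqP; rewrite -subr_eq0 addrK (negbTE i0).
    * have j0 : j < 0.
        by rewrite lt_neqAle jn andbT; move: rw; rewrite redcons => /and3P[].
      have [e [Z [e0 E]]] := Hm j0.
      rewrite E /push (negbTE i0) /=.
      split; first by rewrite Wcons [in RHS]Wcons -IW E.
      by split => e' Z' [] // _ <- _.
Qed.
Lemma iv_to_i g : split_qm fA fB (F2ext gen_a (xbm m) g) = split_qm fA fB g.
Proof. by rewrite !split_qmE F2extE; have [] := @InvP (val g) (valP g). Qed.
End Inv.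

Section Lim.
Variable R : realType.

Lemma bdiv_cvg0 (u : nat -> R) C : (forall k, `|u k| <= C) ->
  (fun k : nat => u k / k%:R) @ \oo --> (0 : R).
Proof.
move=> hu; have C0 : 0 <= C by apply: le_trans (hu 0%N).
apply/cvgrPdist_le => e e0; near=> k.
have k0 : (0 < k)%N by near: k; apply: nbhs_infty_gt.
have kC : C / e <= k%:R.
  apply: le_trans (ltW (archi_boundP _)) _; first by apply: divr_ge0 => //; apply: ltW.
  by rewrite ler_nat; near: k; apply: nbhs_infty_ge.
rewrite distrC subr0 normrM normfV normr_nat ler_pdivrMr ?ltr0n //.
apply: le_trans (hu k) _.
by rewrite -ler_pdivrMl // mulrC.
Unshelve. all: by end_near.
Qed.

Lemma lim_bdiv0 (u : nat -> R) C : (forall k, `|u k| <= C) ->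
  limn (fun k : nat => u k / k%:R) = 0.
Proof. by move=> hu; apply: norm_cvg_lim; apply: bdiv_cvg0 hu. Qed.

Lemma lim_lin (u : nat -> R) c : (forall k, u k = k%:R * c) ->
  limn (fun k : nat => u k / k%:R) = c.
Proof.
move=> hu; apply: norm_cvg_lim; apply: cvg_near_cst; near=> k.
have k0 : (0 < k)%N by near: k; apply: nbhs_infty_gt.
by rewrite hu mulrC mulrA mulVf ?mul1r // pnatr_eq0 -lt0n.
Unshelve. all: by end_near.
Qed.

Lemma bdd_lin0 c (C : R) : (forall j : nat, `|j%:R * c| <= C) -> c = 0.
Proof.
move=> h; apply/eqP; apply/negPn/negP => c0.
have C0 : 0 <= C by apply: le_trans (h 0%N).
have cp : 0 < `|c| by rewrite normr_gt0.
have := h (Num.bound (C / `|c|)); rewrite normrM normr_nat.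
have := archi_boundP (divr_ge0 C0 (ltW cp)).
rewrite ltr_pdivrMr // => H1 H2.
by have := lt_le_trans H1 H2; rewrite ltxx.
Qed.
End Lim.

Section Core.
Variable R : realType.

Lemma alt0 (h : int -> R) : alternatingf h -> h 0 = 0.
Proof.
move=> ha; have := ha 0; rewrite oppr0 => /eqP.
by rewrite -subr_eq0 opprK -mulr2n mulrn_eq0 /= => /eqP.
Qed.

Lemma core (fA fB : int -> R) n c1 : n != 0 -> alternatingf fA -> alternatingf fB ->
  boundedfun fA ->
  fA (- n) + fB 1 = c1 -> - (fA n + fB 1) = c1 ->
  (forall k (p : nat), k != 0 -> k != n ->
     fA (k - n) + p.+1%:R * fB 1 + p%:R * fA (- n) - fA k - fB (Posz p.+1) = p.+1%:R * c1) ->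
  (forall k, fA (k + n) = fA k) /\ (forall k, fB k = 0).
Proof.
move=> n0 hA hB [C hC] e1 e2 e4.
have fA0 := @alt0 fA hA; have fB0 := @alt0 fB hB.
have fB1 : fB 1 = 0.
  move: e1 e2; rewrite hA; lra.
have c1E : c1 = - fA n by move: e2; rewrite fB1; lra.
have h3 k : k != 0 -> k != n -> fA (k - n) - fA k = c1.
  move=> k0 kn; have := e4 k 0%N k0 kn.
  have -> : fB (Posz 1) = fB 1 by [].
  rewrite fB1 mulr0 mul0r !addr0 subr0 mul1r; lra.
have lin (j : nat) : fA (Posz j.+1 * n) = j.+1%:R * fA n.
  elim: j => [|j IH]; first by rewrite mul1r mul1r.
  have nz : Posz j.+2 * n != 0 by rewrite mulf_eq0 negb_or n0 andbT.
  have nn : Posz j.+2 * n != n.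
    by apply/negP => /eqP h; move: h => /eqP; rewrite -subr_eq0 -{2}(mul1r n) -mulrBl mulf_eq0 (negbTE n0) orbF.
  have := h3 _ nz nn.
  have -> : Posz j.+2 * n - n = Posz j.+1 * n.
    have -> : Posz j.+2 = Posz j.+1 + 1 by rewrite -PoszD addn1.
    by rewrite mulrDl mul1r addrK.
  rewrite IH c1E -[j.+2%:R]natr1; lra.
have fAn : fA n = 0.
  apply: (@bdd_lin0 R _ C) => -[|j]; first by rewrite mul0r normr0; apply: le_trans (hC 0).
  by rewrite -lin.
have c10 : c1 = 0 by rewrite c1E fAn oppr0.
have fAmn : fA (- n) = 0 by rewrite hA fAn oppr0.
have n2 : n + n != 0 by rewrite -mulr2n mulrn_eq0 (negbTE n0).
have n2n : n + n != n by rewrite -subr_eq0 addrK.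
split.
  move=> k.
  have [kn|kn] := eqVneq (k + n) 0.
    have -> : k = - n by apply/eqP; rewrite -subr_eq0 opprK kn.
    by rewrite addNr fA0 fAmn.
  have [k0|k0] := eqVneq k 0; first by rewrite k0 add0r fAn fA0.
  have kn' : k + n != n by rewrite -subr_eq0 addrK.
  by have := h3 _ kn kn'; rewrite addrK c10 => /eqP; rewrite subr_eq0 => /eqP.
have fBp (p : nat) : fB (Posz p.+1) = 0.
  have H4 := e4 (n + n) p n2 n2n; have H3 := h3 _ n2 n2n.
  rewrite c10 fB1 fAmn !mulr0 in H4 H3; lra.
move=> [[|p]|p]; first by [].
  exact: fBp.
have -> : Negz p = - Posz p.+1 by rewrite NegzE.
by rewrite hB fBp oppr0.
Qed.
End Core.

Lemma last_rep2 (y x z : syl) p : last y (rep p [:: x; z]) = if p == 0%N then y else z.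
Proof. by elim: p => [|p IH] //=; case: p IH. Qed.

Lemma Phi1 xa xb s : Phi xa xb [:: s] = phi xa xb s.
Proof. by rewrite /= F2mulx1. Qed.

Section Main.
Variables (R : realType) (fA fB : int -> R) (n : int).
Hypotheses (n0 : n != 0) (hA : alternatingf fA) (hB : alternatingf fB)
  (hAbd : boundedfun fA) (hBbd : boundedfun fB).

Local Notation f := (split_qm fA fB).
Local Notation T := (tau_inv n).
Local Notation W := (@Wt R fA fB).

Let mn0 : - n != 0. Proof. by rewrite oppr_eq0. Qed.
Let TE : T = F2ext gen_a (xbm (- n)). Proof. by []. Qed.
Let ub := [:: (false, - n); (true, 1)].

Definition wb : F2 := mk [:: (true, 1)].
Definition wa (K : int) : F2 := mk [:: (false, K)].
Definition wab (k l : int) : F2 := mk [:: (false, k); (true, l)].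

Lemma val_wab k l : k != 0 -> l != 0 -> val (wab k l) = [:: (false, k); (true, l)].
Proof. by move=> k0 l0; rewrite valmk // redcons /= k0 redcons l0. Qed.

Lemma f_pow_cyc y x u (j : nat) : val y = x :: u -> (last x u).1 != x.1 ->
  f (F2pow y j) = j%:R * W (x :: u).
Proof. by move=> vy c; rewrite split_qmE (@val_pow_cyc x u y j vy c) Wrep. Qed.

Lemma f_pow_b (j : nat) : f (F2pow wb j) = fB j.
Proof.
rewrite split_qmE /wb val_powg; case: j => [|j] /=; first by rewrite Wnil alt0.
by rewrite Wcons Wnil /= addr0.
Qed.


Lemma valT_b : val (T wb) = ub.
Proof.
rewrite TE F2extE valmk // Phi1 (@val_phi_bp (- n) 1 mn0).
by rewrite /rep /=.
Qed.

Lemma valT_ab k (p : nat) : k != 0 -> val (T (wab k (Posz p.+1))) =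
  if k - n == 0 then (true, 1) :: rep p ub else (false, k - n) :: (true, 1) :: rep p ub.
Proof.
move=> k0; rewrite TE F2extE val_wab //= F2mulx1 valM (@val_phi_bp (- n) _ mn0) val_phi_a (negbTE k0) /=.
by rewrite /push (negbTE k0) /=.
Qed.

Lemma T_nb : T (wab n 1) = wb.
Proof.
apply: val_inj; by rewrite (@valT_ab n 0 n0) subrr eqxx valmk.
Qed.

Lemma cyc_ab c p : (last (false, c) ((true, 1) :: rep p ub)).1 != (false, c).1.
Proof. by rewrite /= last_rep2; case: (p == 0%N). Qed.


Lemma W_ab c p : W ((false, c) :: (true, 1) :: rep p ub) = fA c + fB 1 + p%:R * (fA (- n) + fB 1).
Proof. by rewrite !Wcons Wrep /= !Wcons Wnil /= addr0 addrA. Qed.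

Lemma homog_cyc y x u : val y = x :: u -> (last x u).1 != x.1 -> homog f y = W (x :: u).
Proof. by move=> vy c; apply: lim_lin => k; apply: f_pow_cyc vy c. Qed.

Lemma homog_b : homog f wb = 0.
Proof.
have [C hC] := hBbd; apply: (@lim_bdiv0 R _ C) => k.
by rewrite f_pow_b.
Qed.

Definition ivP := (forall k : int, fA (k + n) = fA k) /\ (forall k : int, fB k = 0).

Lemma ii_iv : act T (homog f) = homog f -> ivP.
Proof.
move=> Hf; have H x : homog f (T x) = homog f x by move: Hf => /(congr1 (fun F => F x)).
apply: (@core R fA fB n 0 n0 hA hB hAbd).
- have := H wb; rewrite homog_b (@homog_cyc _ _ [:: (true, 1)] valT_b) //.
  by rewrite !Wcons Wnil /= addr0.
- have := H (wab n 1); rewrite T_nb homog_b (@homog_cyc _ _ [:: (true, 1)] (@val_wab n 1 n0 isT)) //.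
  by rewrite !Wcons Wnil /= addr0 => <-; rewrite oppr0.
- move=> k p k0 kn; have := H (wab k (Posz p.+1)).
  have kn' : (k - n == 0) = false by apply/negbTE; rewrite subr_eq0.
  have vT := @valT_ab k p k0; rewrite kn' in vT.
  rewrite (@homog_cyc _ _ _ vT) ?cyc_ab //.
  rewrite (@homog_cyc _ _ [:: (true, Posz p.+1)] (@val_wab k (Posz p.+1) k0 isT)) //.
  rewrite W_ab !Wcons Wnil /= addr0 mulr0 -natr1 !mulrDl !mulrDr !mul1r; lra.
Qed.


Lemma T_pow x (j : nat) : T (F2pow x j) = F2pow (T x) j.
Proof. by rewrite TE F2ext_pow. Qed.

Lemma T_a y : (val y = [::]) \/ (exists c, c != 0 /\ val y = [:: (false, c)]) -> T y = y.
Proof.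
move=> H; apply: val_inj; rewrite TE F2extE.
case: H => [->|[c [c0 ->]]] //.
by rewrite Phi1 val_phi_a (negbTE c0).
Qed.

Lemma wab_mul k l : k != 0 -> l != 0 -> wab k l = F2mul (wa k) (mk [:: (true, l)]).
Proof.
move=> k0 l0; apply: val_inj; rewrite valM val_wab // !valmk ?redcons ?k0 ?l0 //=.
by rewrite /push (negbTE k0).
Qed.

Lemma mkb_pow (p : nat) : mk [:: (true, Posz p.+1)] = F2pow wb p.+1.
Proof. by apply: val_inj; rewrite /wb val_powg valmk. Qed.

Lemma iii_iv : same_bclass (act T f) f -> ivP.
Proof.
move=> [beta [[Cb hb] Hc]].
have [CA hCA] := hAbd; have [CB hCB] := hBbd.
have CB0 : 0 <= CB by apply: le_trans (hCB 0).
have CA0 : 0 <= CA by apply: le_trans (hCA 0).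
pose hh g := f (T g) - f g - beta g.
have hh_mul g h : hh (F2mul g h) = hh g + hh h.
  by have := Hc g h; rewrite /cobound /act /hh /tau_inv; lra.
have hh1 : hh F2one = 0 by have := hh_mul F2one F2one; rewrite F2mul1x; lra.
have hh_pow x (j : nat) : hh (F2pow x j) = j%:R * hh x.
  elim: j => [|j IH]; first by rewrite mul0r.
  change (F2pow x j.+1) with (F2mul x (F2pow x j)).
  by rewrite hh_mul IH -natr1 mulrDl mul1r addrC.
have key x a b (e1 e2 : nat -> R) C : (forall j, `|e1 j| <= C) -> (forall j, `|e2 j| <= C) ->
    (forall j : nat, f (T (F2pow x j)) = j%:R * a + e1 j) ->
    (forall j : nat, f (F2pow x j) = j%:R * b + e2 j) -> a - b = hh x.
  move=> he1 he2 h1 h2; apply/eqP; rewrite -subr_eq0; apply/eqP.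
  apply: (@bdd_lin0 R _ (Cb + C + C)) => j.
  have E : j%:R * (a - b - hh x) = beta (F2pow x j) - e1 j + e2 j.
    rewrite -[_ * (a - b - _)]/(_) mulrBr -hh_pow /hh h1 h2; ring.
  rewrite E; have := ler_normD (beta (F2pow x j) - e1 j) (e2 j).
  have := ler_normB (beta (F2pow x j)) (e1 j).
  have := hb (F2pow x j); have := he1 j; have := he2 j; lra.
have hha K : K != 0 -> hh (wa K) = 0.
  move=> K0.
  have ef (j : nat) : f (F2pow (wa K) j) = fA (K * j%:Z).
    rewrite split_qmE val_pow1 //; case: j => [|j] /=; first by rewrite mulr0 Wnil alt0.
    by rewrite Wcons Wnil addr0.
  have := @key (wa K) 0 0 (fun j => fA (K * j%:Z)) (fun j => fA (K * j%:Z)) CA (fun j => hCA _) (fun j => hCA _).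
  rewrite subrr => <- // j; rewrite mulr0 add0r -ef //.
  rewrite T_a // val_pow1 //; case: j => [|j] /=; first by left.
  right; exists (K * Posz j.+1); split => //.
  by rewrite mulf_eq0 negb_or K0.
have hhb (p : nat) : hh (mk [:: (true, Posz p.+1)]) = p.+1%:R * hh wb.
  by rewrite mkb_pow hh_pow.
apply: (@core R fA fB n (hh wb) n0 hA hB hAbd).
- have := @key wb (W ub) 0 (fun _ => 0) (fun j => fB j) CB.
  rewrite subr0 => <-; try by move=> j /=; rewrite ?normr0 ?hCB.
  + by rewrite /ub !Wcons Wnil /= addr0.
  + by move=> j; rewrite T_pow (@f_pow_cyc _ _ [:: (true, 1)] j valT_b) // addr0.
  + by move=> j; rewrite f_pow_b mulr0 add0r.
- have := @key (wab n 1) 0 (fA n + fB 1) (fun j => fB j) (fun _ => 0) CB.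
  rewrite sub0r => ->; try by move=> j /=; rewrite ?normr0 ?hCB.
  + by rewrite wab_mul // hh_mul hha // add0r.
  + by move=> j; rewrite T_pow T_nb f_pow_b mulr0 add0r.
  + move=> j; rewrite (@f_pow_cyc _ _ [:: (true, 1)] j (@val_wab n 1 n0 isT)) // addr0.
    by rewrite !Wcons Wnil /= addr0.
- move=> k p k0 kn.
  have kn' : (k - n == 0) = false by apply/negbTE; rewrite subr_eq0.
  have vT := @valT_ab k p k0; rewrite kn' in vT.
  have := @key (wab k (Posz p.+1)) (W ((false, k - n) :: (true, 1) :: rep p ub))
    (fA k + fB (Posz p.+1)) (fun _ => 0) (fun _ => 0) 0.
  rewrite wab_mul // hh_mul hha // add0r hhb W_ab => <-; try by move=> j /=; rewrite ?normr0.
  + rewrite -natr1 !mulrDl !mulrDr !mul1r; lra.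
  + by move=> j; rewrite -wab_mul // T_pow (@f_pow_cyc _ _ _ j vT) ?cyc_ab // W_ab addr0.
  + move=> j; rewrite -wab_mul // (@f_pow_cyc _ _ [:: (true, Posz p.+1)] j (@val_wab k (Posz p.+1) k0 isT)) // addr0.
    by rewrite !Wcons Wnil /= addr0.
Qed.

Lemma iv_i : ivP -> act T f = f.
Proof.
move=> [hper hB0]; apply: funext => g; rewrite /act TE.
apply: (@iv_to_i R fA fB (- n) mn0 _ hA hB0) => k.
by rewrite -{2}(subrK n k) hper.
Qed.

Lemma i_ii : act T f = f -> act T (homog f) = homog f.
Proof.
move=> Hf; have H x : f (T x) = f x by move: Hf => /(congr1 (fun F => F x)).
apply: funext => g; rewrite /act /homog.
have -> : (fun k : nat => f (F2pow (T g) k%:Z) / k%:R) = (fun k : nat => f (F2pow g k%:Z) / k%:R).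
  by apply: funext => k; rewrite -T_pow H.
by [].
Qed.

Lemma i_iii : act T f = f -> same_bclass (act T f) f.
Proof.
move=> Hf; exists (fun _ => 0); split; first by exists 0 => x; rewrite normr0.
by move=> g h; rewrite Hf /cobound; lra.
Qed.

End Main.

Lemma fA_zero (R : realType) (fA : int -> R) n : n != 0 -> `|n| <= 2 -> alternatingf fA ->
  (forall k, fA (k + n) = fA k) -> forall k, fA k = 0.
Proof.
move=> n0 n2 ha hp.
have h2 k : fA (k + 2) = fA k.
  have : n = 1 \/ n = -1 \/ n = 2 \/ n = -2.
    by move: n2 n0; rewrite ler_norml => /andP[a b] c; lia.
  case=> [E|[E|[E|E]]]; rewrite E in hp.
  - have -> : k + 2 = k + 1 + 1 by rewrite -addrA.
    by rewrite !hp.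
  - rewrite -(hp (k + 2)) -(hp (k + 2 + -1)).
    by have -> : k + 2 + -1 + -1 = k by ring.
  - by rewrite hp.
  - by rewrite -(hp (k + 2)); have -> : k + 2 + -2 = k by ring.
have f0 := @alt0 R fA ha.
have f1 : fA 1 = 0.
  have := h2 (-1); have -> : -1 + 2 = 1 :> int by [].
  rewrite ha; lra.
have fnat (j : nat) : fA (Posz j) = 0 /\ fA (Posz j.+1) = 0.
  elim: j => [|j [IH0 IH]]; first by split.
  split => //; have -> : Posz j.+2 = Posz j + 2 by rewrite -PoszD addn2.
  by rewrite h2.
case=> [j|j]; first by have [] := fnat j.
by rewrite NegzE ha; have [_ ->] := fnat j; rewrite oppr0.
Qed.


Theorem theorem3p20 (R : realType) (fA fB : int -> R) (n : int)
  (hAalt : alternatingf fA) (hBalt : alternatingf fB)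
  (hAbd : boundedfun fA) (hBbd : boundedfun fB) (hn : n != 0) :
  let f := split_qm fA fB in
  [/\ (act (tau_inv n) f = f <-> act (tau_inv n) (homog f) = homog f),
      (act (tau_inv n) f = f <-> same_bclass (act (tau_inv n) f) f),
      (act (tau_inv n) f = f <->
         ((forall k : int, fA (k + n) = fA k) /\ (forall k : int, fB k = 0)))
    & (`|n| <= 2 -> act (tau_inv n) f = f -> forall g, f g = 0)].
Proof.
move=> f.
have i_iv : act (tau_inv n) f = f -> @ivP R fA fB n.
  by move=> h; apply: iii_iv => //; apply: i_iii.
have iv_i' : @ivP R fA fB n -> act (tau_inv n) f = f by move=> h; apply: iv_i.
split.
- split => h; first by apply: i_ii.
  by apply: iv_i'; apply: ii_iv.
- split => h; first by apply: i_iii.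
  by apply: iv_i'; apply: iii_iv.
- by split.
- move=> hn2 Hf g; have [hp hB0] := i_iv Hf.
  have hA0 := @fA_zero R fA n hn hn2 hAalt hp.
  rewrite /f split_qmE /Wt big1 // => -[[] k] _ /=; by rewrite ?hA0 ?hB0.
Qed.
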